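(* Let $\nu\in A_2$, $0<p<\infty$, and let $\mathcal D$ be a dyadic system in $\mathbb R^n$. Then $\mathbf B^p_\nu(\mathbb R^n,\mathcal D)\subset\mathrm{VMO}_\nu(\mathbb R^n,\mathcal D)$.
   Context: $A_2$: weights $w$ with $\sup_Q(\frac1{|Q|}\int_Qw)(\frac1{|Q|}\int_Qw^{-1})<\infty$; $w(E)=\int_Ew$. A dyadic system is any $\mathcal D^\omega=\bigcup_k\{2^{-k}([0,1)^n+m+(-1)^k\omega):m\in\mathbb Z^n\}$, $\omega\in\{0,\frac13,\frac23\}^n$. $\|b\|^p_{\mathbf B^p_\nu(\mathbb R^n,\mathcal D)}:=\sum_{Q\in\mathcal D}\big(\frac1{\nu(Q)}\int_Q|b-\langle b\rangle_Q|\big)^p$, $\langle b\rangle_Q$ the average. $\mathrm{BMO}_\nu(\mathbb R^n,\mathcal D)$ is the set of $b\in L^1_{loc}$ with $\sup_{Q\in\mathcal D}\frac1{\nu(Q)}\int_Q|b-\langle b\rangle_Q|<\infty$, and $\mathrm{VMO}_\nu(\mathbb R^n,\mathcal D)$ the set of such $b$ for which $\frac1{\nu(Q)}\int_Q|b-\langle b\rangle_Q|\to0$ uniformly over $Q\in\mathcal D$ as $\ell(Q)\to0$, as $\ell(Q)\to\infty$, and for $Q\subset\mathbb R^n\setminus B(x_0,a)$ as $a\to\infty$ ($x_0$ a fixed point). *)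

(* Defs.v *)
From HB Require Import structures.
From mathcomp Require Import all_boot all_order all_algebra.
From mathcomp Require Import all_classical all_reals all_analysis.
Import Order.TTheory GRing.Theory Num.Theory.

Set Implicit Arguments.
Unset Strict Implicit.
Unset Printing Implicit Defensive.

Local Open Scope ring_scope.
Local Open Scope classical_set_scope.

(* Product of two sigma-finite measures, packaged as a sigma-finite    *)
(* measure (the library proves this but the instance is not canonical  *)
(* on [product_measure1], so we re-package it under an alias).         *)
Section sf_prod.
Local Open Scope ereal_scope.
Context d1 d2 (T1 : measurableType d1) (T2 : measurableType d2) (R : realType).
Variable m1 : {sigma_finite_measure set T1 -> \bar R}.
Variable m2 : {sigma_finite_measure set T2 -> \bar R}.

Definition sf_prod : set (T1 * T2)%type -> \bar R := (m1 \x m2)%E.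

HB.instance Definition _ := Measure.on sf_prod.

Lemma sf_prod_sigma_finite : sigma_finite setT sf_prod.
Proof.
have /sigma_finiteP[F [TF ndF Foo]] := sigma_finiteT m1.
have /sigma_finiteP[G [TG ndG Goo]] := sigma_finiteT m2.
exists (fun n => F n `*` G n).
 rewrite -setXTT TF TG predeqE => -[x y]; split.
    move=> [/= [n _ Fnx] [k _ Gky]]; exists (maxn n k) => //; split.
    - by move: x Fnx; exact/subsetPset/ndF/leq_maxl.
    - by move: y Gky; exact/subsetPset/ndG/leq_maxr.
  by move=> [n _ []/= ? ?]; split; exists n.
move=> k; have [? ?] := Foo k; have [? ?] := Goo k.
split; first exact: measurableX.
by rewrite /sf_prod product_measure1E// lte_mul_pinfty// ge0_fin_numE.
Qed.

HB.instance Definition _ := Measure_isSigmaFinite.Build _ _ _ sf_prod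
  sf_prod_sigma_finite.
End sf_prod.

Section Rn.
Variable R : realType.

(* R^n is modelled as R * (R * ( ... * unit)), with the Borel sigma-algebra *)
(* of each factor and the product sigma-algebra.                            *)
Fixpoint Rn_disp (n : nat) : measure_display :=
  if n is n'.+1 then (sigma_display (@measurable _ (ocitv_type R)), Rn_disp n').-prod
  else default_measure_display.

Fixpoint Rn (n : nat) : measurableType (Rn_disp n) :=
  match n return measurableType (Rn_disp n) with
  | 0 => unit
  | n'.+1 => (measurableTypeR R * Rn n')%type
  end.

Fixpoint lebn (n : nat) : {sigma_finite_measure set (Rn n) -> \bar R} :=
  match n return {sigma_finite_measure set (Rn n) -> \bar R} with
  | 0 => @dirac _ unit tt R
  | n'.+1 => sf_prod (@lebesgue_measure R) (lebn n')
  end.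

Fixpoint coord (n : nat) : Rn n -> 'I_n -> R :=
  match n return Rn n -> 'I_n -> R with
  | 0 => fun _ _ => 0
  | n'.+1 => fun x i =>
      match unlift ord0 i with
      | None => x.1
      | Some j => coord x.2 j
      end
  end.
End Rn.

Section harmonic.
Variables (R : realType) (n : nat).
Local Notation T := (Rn R n).
Local Notation mu := (lebn R n).

Definition box (r : R) : set T := [set x | forall i, - r <= coord x i <= r].

(* L^1_loc: measurable, integrable on every bounded box (hence on every compact set) *)
Definition locally_integrable (f : T -> R) : Prop :=
  measurable_fun setT f /\
  forall r : R, 0 < r -> mu.-integrable (box r) (EFin \o f).

Definition cube (a : 'I_n -> R) (l : R) : set T :=
  [set x | forall i, a i <= coord x i < a i + l].

Definition avg (f : T -> R) (Q : set T) : R :=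
  (fine (mu Q))^-1 * Rintegral mu Q f.

Definition weight (w : T -> R) : Prop :=
  (forall x, 0 < w x) /\ locally_integrable w.

Definition A2 (w : T -> R) : Prop :=
  weight w /\
  exists C : R, forall (a : 'I_n -> R) (l : R), 0 < l ->
    ((avg w (cube a l))%:E *
     (((fine (mu (cube a l)))^-1)%:E *
       \int[mu]_(x in cube a l) ((w x)^-1)%:E) <= C%:E)%E.

Definition wmeas (w : T -> R) (E : set T) : \bar R :=
  (\int[mu]_(x in E) (w x)%:E)%E.

Definition mo (nu b : T -> R) (Q : set T) : \bar R :=
  ((\int[mu]_(x in Q) (`|b x - avg b Q|)%:E) * (wmeas nu Q)^-1)%E.

Definition dyadic_shift (omega : 'I_n -> R) : Prop :=
  forall i, omega i = 0 \/ omega i = 1/3 \/ omega i = 2/3.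

(* the cube 2^{-k}([0,1)^n + m + (-1)^k omega) *)
Definition dcube (omega : 'I_n -> R) (k : int) (m : 'I_n -> int) : set T :=
  [set x | forall i,
     (2:R) ^ (- k) * ((m i)%:~R + (-1) ^ k * omega i) <= coord x i <
     (2:R) ^ (- k) * ((m i)%:~R + 1 + (-1) ^ k * omega i)].

Definition dyadic_system (omega : 'I_n -> R) : set (set T) :=
  [set Q | exists (k : int) (m : 'I_n -> int), Q = dcube omega k m].

Definition dside (omega : 'I_n -> R) (Q : set T) (l : R) : Prop :=
  exists (k : int) (m : 'I_n -> int), Q = dcube omega k m /\ l = (2:R) ^ (- k).

Definition eball (x0 : 'I_n -> R) (a : R) : set T :=
  [set x | \sum_(i < n) (coord x i - x0 i) ^+ 2 < a ^+ 2].

Definition Besov (p : R) (nu : T -> R) (omega : 'I_n -> R) : set (T -> R) :=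
  [set b | locally_integrable b /\
     (\esum_(Q in dyadic_system omega) poweR (mo nu b Q) p < +oo)%E].

Definition BMO (nu : T -> R) (omega : 'I_n -> R) : set (T -> R) :=
  [set b | locally_integrable b /\
     exists C : R, forall Q, dyadic_system omega Q -> (mo nu b Q <= C%:E)%E].

Definition VMO (nu : T -> R) (omega : 'I_n -> R) : set (T -> R) :=
  [set b | BMO nu omega b /\
    (forall eps : R, 0 < eps -> exists2 delta : R, 0 < delta &
       forall Q l, dyadic_system omega Q -> dside omega Q l -> l < delta ->
         (mo nu b Q < eps%:E)%E) /\
    (forall eps : R, 0 < eps -> exists N : R,
       forall Q l, dyadic_system omega Q -> dside omega Q l -> N < l ->
         (mo nu b Q < eps%:E)%E) /\
    (forall (x0 : 'I_n -> R) (eps : R), 0 < eps -> exists A : R,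
       forall Q a, dyadic_system omega Q -> A < a -> Q `<=` ~` eball x0 a ->
         (mo nu b Q < eps%:E)%E)].

End harmonic.

(* Main.v *)
Require Import Defs.
From HB Require Import structures.
From mathcomp Require Import all_boot all_order all_algebra.
From mathcomp Require Import all_classical all_reals all_analysis.
From mathcomp Require Import finmap ring lra.
Import Order.TTheory GRing.Theory Num.Theory.
Local Open Scope ring_scope.
Local Open Scope classical_set_scope.

Section aux.
Variable R : realType.
Local Open Scope ereal_scope.

Lemma sum_seq_ge (T : eqType) (s : seq T) (a : T -> \bar R) (e : R) :
  (forall x, x \in s -> e%:E <= a x) ->
  ((size s)%:R * e)%:E <= \sum_(i <- s) a i.
Proof.
elim: s => [|x s IH] H; first by rewrite big_nil mul0r.
rewrite big_cons /= -addn1 natrD mulrDl mul1r EFinD addeC.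
apply: leeD; first by apply: H; rewrite inE eqxx.
by apply: IH => y ys; apply: H; rewrite inE ys orbT.
Qed.

Lemma finite_bad (T : choiceType) (D : set T) (a : T -> \bar R) (e : R) :
  (0 < e)%R -> (forall x, D x -> 0 <= a x) -> \esum_(i in D) a i < +oo ->
  finite_set [set x | D x /\ e%:E <= a x].
Proof.
move=> e0 a0 Slt; apply: contrapT => inf.
have S0 : 0 <= \esum_(i in D) a i by apply: esum_ge0.
have Sfin : \esum_(i in D) a i \is a fin_num by rewrite ge0_fin_numE.
pose N := (Num.truncn (fine (\esum_(i in D) a i) / e)).+1.
have [B Bsub BN] := infinite_set_fset N inf.
have : ((size (finmap.enum_fset B))%:R * e)%:E <= \esum_(i in D) a i.
  apply: esum_ge; exists ([set` B] : set T).
    by split => // x /Bsub [].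
  rewrite fsbig_finite //= set_fsetK.
  apply: sum_seq_ge => x xB; by have [] := Bsub x (xB : x \in B).
rewrite -(fineK Sfin) lee_fin -ler_pdivlMr //.
apply/negP; rewrite -ltNge.
apply: (lt_le_trans (Num.Theory.truncnS_gt _)).
by rewrite ler_nat.
Qed.

Lemma seq_bound (T : eqType) (P : T -> R -> Prop) (s : seq T) :
  (forall x M M', P x M -> (M <= M')%R -> P x M') ->
  (forall x, x \in s -> exists M, P x M) ->
  exists M, forall x, x \in s -> P x M.
Proof.
move=> Pup; elim: s => [|y s IH] H; first by exists 0%R.
have [M1 HM1] := H y (mem_head _ _).
have [M2 HM2] : exists M, forall x, x \in s -> P x M.
  by apply: IH => x xs; apply: H; rewrite inE xs orbT.
exists (Num.max M1 M2) => x; rewrite inE => /orP[/eqP->|xs].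
  by apply: Pup HM1 _; rewrite le_max lexx.
by apply: (Pup _ _ _ (HM2 x xs)); rewrite le_max lexx orbT.
Qed.

Lemma finite_bound (T : choiceType) (P : T -> R -> Prop) (A : set T) :
  finite_set A ->
  (forall x M M', P x M -> (M <= M')%R -> P x M') ->
  (forall x, A x -> exists M, P x M) ->
  exists M, forall x, A x -> P x M.
Proof.
move=> /finite_fsetP[F ->] Pup H.
have [M HM] := @seq_bound T P (finmap.enum_fset F) Pup (fun x xF => H x xF).
by exists M => x xF; apply: HM.
Qed.
End aux.
Section geo.
Variable R : realType.

Lemma point_ex {n : nat} (f : 'I_n -> R) : exists x : Rn R n, forall i, Defs.coord x i = f i.
Proof.
elim: n f => [|n IH] f; first by exists tt => -[].
have [y Hy] := IH (fun j => f (lift ord0 j)).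
exists ((f ord0, y) : Rn R n.+1) => i /=.
by case: unliftP => [j ->|->]; rewrite ?Hy.
Qed.

Lemma dcube_nonempty (n : nat) (omega : 'I_n -> R) (k : int) (m : 'I_n -> int) :
  exists x, dcube omega k m x.
Proof.
have [x Hx] := point_ex (fun i => (2:R) ^ (- k) * ((m i)%:~R + (-1) ^ k * omega i)).
exists x => i; rewrite Hx lexx /=.
rewrite ltr_pM2l; last by apply: exprz_gt0.
  by rewrite ltrD2r ltrDl ltr01.
Qed.

Lemma dside_uniq (n : nat) (omega : 'I_n.+1 -> R) Q l l' :
  dside omega Q l -> dside omega Q l' -> l = l'.
Proof.
move=> [k [m [-> ->]]] [k' [m' [E ->]]].
pose a := (2:R) ^ (- k) * ((m ord0)%:~R + (-1) ^ k * omega ord0).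
pose b := (2:R) ^ (- k) * ((m ord0)%:~R + 1 + (-1) ^ k * omega ord0).
pose a' := (2:R) ^ (- k') * ((m' ord0)%:~R + (-1) ^ k' * omega ord0).
pose b' := (2:R) ^ (- k') * ((m' ord0)%:~R + 1 + (-1) ^ k' * omega ord0).
have ba : b - a = (2:R) ^ (- k) by rewrite /a /b; ring.
have ba' : b' - a' = (2:R) ^ (- k') by rewrite /a' /b'; ring.
have key : forall (k1 k2 : int) (m1 m2 : 'I_n.+1 -> int),
    dcube omega k1 m1 = dcube omega k2 m2 ->
    forall t, (2:R) ^ (- k1) * ((m1 ord0)%:~R + (-1) ^ k1 * omega ord0) <= t <
              (2:R) ^ (- k1) * ((m1 ord0)%:~R + 1 + (-1) ^ k1 * omega ord0) ->
    (2:R) ^ (- k2) * ((m2 ord0)%:~R + (-1) ^ k2 * omega ord0) <= t <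
              (2:R) ^ (- k2) * ((m2 ord0)%:~R + 1 + (-1) ^ k2 * omega ord0).
  move=> k1 k2 m1 m2 E12 t Ht.
  have [x Hx] := point_ex (fun i => if i == ord0 then t else
      (2:R) ^ (- k1) * ((m1 i)%:~R + (-1) ^ k1 * omega i)).
  have : dcube omega k1 m1 x.
    move=> i; rewrite Hx; case: eqP => [->//|_].
    rewrite lexx /= ltr_pM2l; last by apply: exprz_gt0.
    by rewrite ltrD2r ltrDl ltr01.
  by rewrite E12 => /(_ ord0); rewrite Hx eqxx.
have I1 := key _ _ _ _ E. have I2 := key _ _ _ _ (esym E).
rewrite -/a -/b -/a' -/b' in I1 I2.
have ab : a < b by rewrite -subr_gt0 ba exprz_gt0.
have ab' : a' < b' by rewrite -subr_gt0 ba' exprz_gt0.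
have /andP[h1 _] : a' <= a < b' by apply: I1; rewrite lexx ab.
have /andP[h2 _] : a <= a' < b by apply: I2; rewrite lexx ab'.
have h3 : b <= b'.
  rewrite leNgt; apply/negP => bb.
  have /andP[_] : a' <= Num.max a b' < b'.
    by apply: I1; rewrite le_max lexx /= gt_max bb ab.
  by rewrite gt_max ltxx andbF.
have h4 : b' <= b.
  rewrite leNgt; apply/negP => bb.
  have /andP[_] : a <= Num.max a' b < b.
    by apply: I2; rewrite le_max lexx /= gt_max bb ab'.
  by rewrite gt_max ltxx andbF.
have e1 : a = a' by apply/eqP; rewrite eq_le h1 h2.
have e2 : b = b' by apply/eqP; rewrite eq_le h3 h4.
by rewrite -ba -ba' e1 e2.
Qed.
End geo.
Section mo.
Variable R : realType.
Local Open Scope ereal_scope.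

Lemma mo_ge0 (n : nat) (nu b : Rn R n -> R) Q :
  (forall x, (0 < nu x)%R) -> 0 <= mo nu b Q.
Proof.
move=> nu0; rewrite /mo mule_ge0 //; first by apply: integral_ge0 => x _; rewrite lee_fin.
by rewrite inve_ge0; apply: integral_ge0 => x _; rewrite lee_fin ltW.
Qed.

Lemma mo_n0 (nu b : Rn R 0 -> R) Q : mo nu b Q = 0.
Proof.
rewrite /mo /avg /=.
rewrite integral_dirac //= diracE.
case: (boolP (tt \in Q)) => tQ; last by rewrite !mul0e.
by rewrite /Rintegral integral_dirac //= indicE tQ invr1 !mul1r subrr normr0 mule0 mul0e.
Qed.
End mo.

Section main.
Variable R : realType.

Lemma main_succ (n : nat) (nu : Rn R n.+1 -> R) (p : R)
    (omega : 'I_n.+1 -> R) :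
  (forall x, (0 < nu x)%R) -> 0 < p ->
  Besov p nu omega `<=` VMO nu omega.
Proof.
move=> nu0 p0 b [bli Sfin].
set D := dyadic_system omega.
set a := fun Q => poweR (mo nu b Q) p.
have a0 : forall Q, D Q -> (0 <= a Q)%E by move=> Q _; apply: poweR_ge0.
have aS : forall Q, D Q -> (a Q <= \esum_(i in D) a i)%E.
  move=> Q DQ; apply: esum_ge; exists [set Q].
    by split; [apply: finite_set1 | move=> x ->].
  by rewrite fsbig_set1.
have mofin : forall Q, D Q -> mo nu b Q \is a fin_num.
  move=> Q DQ; rewrite ge0_fin_numE; last exact: mo_ge0.
  rewrite ltNge leye_eq; apply/negP => /eqP moy.
  have := le_lt_trans (aS Q DQ) Sfin.
  by rewrite /a moy poweRyr ?ltxx // gt_eqF.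
have bad : forall e, 0 < e -> finite_set [set Q | D Q /\ (e%:E <= mo nu b Q)%E].
  move=> e e0.
  apply: (sub_finite_set _ (@finite_bad R _ D a _ (@powR_gt0 R e p e0) a0 Sfin)).
  move=> Q [DQ eQ]; split => //.
  rewrite /a -(fineK (mofin Q DQ)) poweR_EFin lee_fin.
  apply: ge0_ler_powR; first exact: ltW.
  - by rewrite nnegrE ltW.
  - by rewrite nnegrE -lee_fin fineK ?(mofin Q DQ) // mo_ge0.
  - by rewrite -lee_fin fineK ?(mofin Q DQ).
have pos2 : forall k : int, 0 < (2:R) ^ (- k) by move=> k; apply: exprz_gt0.
split; [split => //|split; [|split]].
- have [M HM] : exists M, forall Q, [set Q | D Q /\ (1%:E <= mo nu b Q)%E] Q ->
      (mo nu b Q <= M%:E)%E.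
    apply: (@finite_bound R _ (fun Q M => (mo nu b Q <= M%:E)%E) _ (bad 1 ltr01)).
      by move=> Q M M' h le; apply: (le_trans h); rewrite lee_fin.
    by move=> Q h; exists (fine (mo nu b Q)); rewrite fineK ?(mofin Q h.1).
  exists (Num.max 1 M) => Q DQ.
  case: (leP 1%:E (mo nu b Q)) => h.
    by apply: (le_trans (HM Q (conj DQ h))); rewrite lee_fin le_max lexx orbT.
  by apply: (le_trans (ltW h)); rewrite lee_fin le_max lexx.
- move=> e e0.
  have [M HM] : exists M, forall Q, [set Q | D Q /\ (e%:E <= mo nu b Q)%E] Q ->
      forall l, dside omega Q l -> l^-1 <= M.
    apply: (@finite_bound R _ (fun Q M => forall l, dside omega Q l -> l^-1 <= M) _ (bad e e0)).
      by move=> Q M M' h le l dl; apply: (le_trans (h l dl)).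
    move=> Q [[k [m E]] _]; exists ((2:R) ^ (- k))^-1 => l dl.
    by rewrite (@dside_uniq R n omega Q l _ dl (ex_intro _ k (ex_intro _ m (conj E erefl)))).
  have X0 : 0 < Num.max 1 M by rewrite lt_max ltr01.
  exists (Num.max 1 M)^-1; first by rewrite invr_gt0.
  move=> Q l DQ dl lt; rewrite ltNge; apply/negP => h.
  have l0 : 0 < l by case: dl => k [m [_ ->]].
  have h2 := HM Q (conj DQ h) l dl.
  have : Num.max 1 M < l^-1.
    by rewrite -[Num.max 1 M]invrK ltf_pV2 // posrE invr_gt0.
  have : M <= Num.max 1 M by rewrite le_max lexx orbT.
  move=> h3 h4; move: (le_lt_trans h2 (le_lt_trans h3 h4)); by rewrite ltxx.
- move=> e e0.
  have [M HM] : exists M, forall Q, [set Q | D Q /\ (e%:E <= mo nu b Q)%E] Q ->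
      forall l, dside omega Q l -> l <= M.
    apply: (@finite_bound R _ (fun Q M => forall l, dside omega Q l -> l <= M) _ (bad e e0)).
      by move=> Q M M' h le l dl; apply: (le_trans (h l dl)).
    move=> Q [[k [m E]] _]; exists ((2:R) ^ (- k)) => l dl.
    by rewrite (@dside_uniq R n omega Q l _ dl (ex_intro _ k (ex_intro _ m (conj E erefl)))).
  exists M => Q l DQ dl lt; rewrite ltNge; apply/negP => h.
  by move: (lt_le_trans lt (HM Q (conj DQ h) l dl)); rewrite ltxx.
- move=> x0 e e0.
  have [M HM] : exists M, forall Q, [set Q | D Q /\ (e%:E <= mo nu b Q)%E] Q ->
      forall r, M < r -> ~ (Q `<=` ~` eball x0 r).
    apply: (@finite_bound R _ (fun Q A => forall r, A < r -> ~ (Q `<=` ~` eball x0 r)) _ (bad e e0)).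
      by move=> Q M M' h le r lt; apply: h; apply: (le_lt_trans le lt).
    move=> Q [[k [m ->]] _].
    have [x Qx] := @dcube_nonempty R n.+1 omega k m.
    exists (\sum_(i < n.+1) (Defs.coord x i - x0 i) ^+ 2 + 1) => r lt sub.
    apply: (sub x Qx); rewrite /eball /=.
    set s := \sum_(i < n.+1) _ in lt *.
    have s0 : 0 <= s by apply: sumr_ge0 => i _; apply: sqr_ge0.
    nra.
  exists M => Q r DQ lt sub; rewrite ltNge; apply/negP => h.
  exact: (HM Q (conj DQ h) r lt sub).
Qed.
End main.

Theorem lemma3p5 (R : realType) (n : nat) (nu : Rn R n -> R) (p : R)
    (omega : 'I_n -> R) :
  A2 nu -> 0 < p -> dyadic_shift omega ->
  Besov p nu omega `<=` VMO nu omega.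
Proof.
move=> [[nu0 _] _] p0 _.
case: n nu omega nu0 => [|n] nu omega nu0; last exact: main_succ.
move=> b [bli _].
have m0 := @mo_n0 R nu b.
split; [split => //; exists 0 => Q _; by rewrite m0 |split; [|split]].
- by move=> e e0; exists 1 => // Q l _ _ _; rewrite m0 lte_fin.
- by move=> e e0; exists 0 => Q l _ _ _; rewrite m0 lte_fin.
- by move=> x0 e e0; exists 0 => Q r _ _ _; rewrite m0 lte_fin.
Qed.
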